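(* Let $H$ be normalised. Then for every integer $j\ge1$, $c^{2j}>\frac1q\mathrm{Tr}\,L^{2j}$.
   Context: Let $q\ge 2$ be an integer and let $(a_n)_{n\in\mathbb Z}$, $(b_n)_{n\in\mathbb Z}$ be real sequences with $a_n>0$, $a_{n+q}=a_n$, $b_{n+q}=b_n$ for all $n$. $H$ is the operator on $\ell^2(\mathbb Z)$ given by $(H\psi)_n=a_{n-1}\psi_{n-1}+b_n\psi_n+a_n\psi_{n+1}$. For $\lambda\in\mathbb C$ let $\phi(\lambda),\theta(\lambda)$ be the solutions of $a_{n-1}\psi_{n-1}+b_n\psi_n+a_n\psi_{n+1}=\lambda\psi_n$ ($n\in\mathbb Z$) with $\phi_0=0,\phi_1=1$ and $\theta_0=1,\theta_1=0$; the discriminant is $D(\lambda)=\phi_{q+1}(\lambda)+\theta_q(\lambda)$. The spectrum of $H$ is $\{\lambda\in\mathbb R:|D(\lambda)|\le 2\}$, with smallest point $\lambda^+_0$ and largest point $\lambda^-_q$; $c=(\lambda^-_q-\lambda^+_0)/2$. $H$ is called normalised if $\lambda^+_0=-\lambda^-_q$. The matrix $L$ is defined by $L=\begin{pmatrix} b_1 & a_1+ia_2\\ a_1-ia_2 & b_2\end{pmatrix}$ if $q=2$, and for $q\ge 3$ by $L_{jj}=b_j$, $L_{j,j+1}=L_{j+1,j}=a_j$ ($1\le j\le q-1$), $L_{1q}=ia_q$, $L_{q1}=-ia_q$, other entries $0$. *)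

(* Defs.v *)
From HB Require Import structures.
From mathcomp Require Import all_boot all_order all_algebra.
From mathcomp Require Import all_classical all_reals.
From mathcomp Require Import complex.
Set Implicit Arguments. Unset Strict Implicit. Unset Printing Implicit Defensive.
Import Order.TTheory GRing.Theory Num.Theory.
Local Open Scope ring_scope.
Local Open Scope classical_set_scope.

Section Jacobi.
Variable R : realType.
Variables (q : nat) (a b : int -> R).

(* Solution of  a_{n-1} psi_{n-1} + b_n psi_n + a_n psi_{n+1} = lam psi_n,
   with initial data psi_0 = p0, psi_1 = p1 (for real lam).
   jacobi_sol lam p0 p1 k = (psi_k, psi_{k+1}). *)
Fixpoint jacobi_sol (lam p0 p1 : R) (k : nat) : R * R :=
  match k with
  | 0 => (p0, p1)
  | k'.+1 =>
      let: (x, y) := jacobi_sol lam p0 p1 k' in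
      (y, ((lam - b (Posz k'.+1)) * y - a (Posz k') * x) / a (Posz k'.+1))
  end.

Definition phi_ (lam : R) (n : nat) : R := (jacobi_sol lam 0 1 n).1.
Definition theta_ (lam : R) (n : nat) : R := (jacobi_sol lam 1 0 n).1.

Definition discr (lam : R) : R := phi_ lam q.+1 + theta_ lam q.

Definition spectrum : set R := [set lam : R | `|discr lam| <= 2].

Definition lam0p : R := inf spectrum.
Definition lamqm : R := sup spectrum.
Definition halfwidth : R := (lamqm - lam0p) / 2.

Definition normalised : Prop := lam0p = - lamqm.

Local Open Scope complex_scope.
(* the matrix L (0-based indices i : 'I_q correspond to 1..q) *)
Definition Lmat : 'M[R[i]]_q :=
  \matrix_(i < q, j < q)
    if i == j then (b (Posz i.+1))%:C
    else if q == 2%N then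
      (if (i == 0%N :> nat) then (a 1)%:C + 'i * (a 2)%:C
       else (a 1)%:C - 'i * (a 2)%:C)
    else if (j == i.+1 :> nat) then (a (Posz i.+1))%:C
    else if (i == j.+1 :> nat) then (a (Posz j.+1))%:C
    else if (i == 0%N :> nat) && (j == q.-1 :> nat) then 'i * (a (Posz q))%:C
    else if (i == q.-1 :> nat) && (j == 0%N :> nat) then - ('i * (a (Posz q))%:C)
    else 0.
End Jacobi.

Definition mxpow (C : pzRingType) (n : nat) (M : 'M[C]_n) (k : nat) : 'M[C]_n :=
  iter k (mulmx M) 1%:M.

(* Main.v *)
Require Import Defs.
From HB Require Import structures.
From mathcomp Require Import all_boot all_order all_algebra.
From mathcomp Require Import all_classical all_reals.
From mathcomp Require Import complex.
From mathcomp Require Import topology normedtype derive.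
From mathcomp Require Import polyrcf.
From mathcomp Require Import ring lra zify.
Import Order.TTheory GRing.Theory Num.Theory.
Import numFieldNormedType.Exports.
Set Implicit Arguments. Unset Strict Implicit. Unset Printing Implicit Defensive.

Module PartA.
Local Open Scope ring_scope.

Section A.
Variables (R : realType) (a b : int -> R).
Hypothesis apos : forall n : int, 0 < a n.

Definition sol lam p0 p1 k := (jacobi_sol a b lam p0 p1 k).1.

Lemma sol2 lam p0 p1 k : (jacobi_sol a b lam p0 p1 k).2 = sol lam p0 p1 k.+1.
Proof. rewrite /sol /=; by case: (jacobi_sol _ _ _ _ _ k). Qed.

Lemma solS lam p0 p1 (k : nat) : sol lam p0 p1 k.+2 =
  ((lam - b k.+1) * sol lam p0 p1 k.+1 - a k * sol lam p0 p1 k) / a k.+1.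
Proof.
rewrite -sol2 -[sol _ _ _ k.+1]sol2 /sol /=.
by case: (jacobi_sol _ _ _ _ _ k).
Qed.

Lemma aneq0 (n : int) : a n != 0. Proof. by rewrite gt_eqF. Qed.

Lemma solR lam p0 p1 (k : nat) : a k * sol lam p0 p1 k + b k.+1 * sol lam p0 p1 k.+1
   + a k.+1 * sol lam p0 p1 k.+2 = lam * sol lam p0 p1 k.+1.
Proof. rewrite solS; field; exact: aneq0. Qed.

Lemma sol0 lam p0 p1 : sol lam p0 p1 0 = p0. Proof. by []. Qed.
Lemma sol1 lam p0 p1 : sol lam p0 p1 1 = p1. Proof. by []. Qed.

Lemma wronsk lam (k : nat) : a k * (sol lam 1 0 k * sol lam 0 1 k.+1
   - sol lam 0 1 k * sol lam 1 0 k.+1) = a 0.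
Proof.
elim: k => [|k IH]; first by rewrite sol0 sol1 sol0 sol1; ring.
rewrite -IH !solS; field; exact: aneq0.
Qed.

Fixpoint psol (p0 p1 : {poly R}) k : {poly R} * {poly R} :=
  match k with
  | 0 => (p0, p1)
  | k'.+1 => let: (x, y) := psol p0 p1 k' in
     (y, (a k'.+1)^-1 *: (('X - (b k'.+1)%:P) * y - a k' *: x))
  end.

Lemma psol_eval lam p0 p1 k : jacobi_sol a b lam p0 p1 k =
  ((psol p0%:P p1%:P k).1.[lam], (psol p0%:P p1%:P k).2.[lam]).
Proof.
elim: k => [|k IH] /=; first by rewrite !hornerC.
rewrite IH; case: (psol _ _ k) => x y /=.
by rewrite hornerZ hornerD hornerN hornerM hornerZ hornerD hornerN hornerX hornerC mulrC.
Qed.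

Lemma psol_phi k : (size (psol 0 1 k).1 = k /\ size (psol 0 1 k).2 = k.+1)
  /\ 0 < lead_coef (psol 0 1 k).2.
Proof.
elim: k => [|k [[IH1 IH2] IH3]] /=.
  by rewrite size_poly0 size_poly1 lead_coef1.
move: IH1 IH2 IH3; case: (psol _ _ k) => x y /= Hx Hy Hl.
have sXy : size (('X - (b k.+1)%:P) * y) = k.+2.
  by rewrite size_monicM ?monicXsubC ?size_XsubC ?Hy // -size_poly_eq0 Hy.
have lXy : lead_coef (('X - (b k.+1)%:P) * y) = lead_coef y.
  by rewrite lead_coef_monicM ?monicXsubC.
have sax : (size (a k *: x) < k.+2)%N.
  by rewrite (leq_ltn_trans (size_scale_leq _ _)) // Hx.
split; [split=>//|].
  by rewrite size_scale ?invr_eq0 ?aneq0 // size_addl ?size_opp ?sXy.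
rewrite lead_coefZ lead_coefDl ?size_opp ?sXy // lXy mulr_gt0 // invr_gt0 //.
Qed.

Lemma psol_theta k : (size (psol 1 0 k).1 <= maxn 1 k)%N /\
  (size (psol 1 0 k).2 <= maxn 1 k.+1)%N.
Proof.
elim: k => [|k [IH1 IH2]] /=.
  by rewrite size_poly0 size_poly1.
move: IH1 IH2; case: (psol _ _ k) => x y /= Hx Hy.
split=> //.
rewrite (leq_trans (size_scale_leq _ _)) //.
rewrite (leq_trans (size_add _ _)) // geq_max size_opp.
apply/andP; split.
  rewrite (leq_trans (size_mul_leq _ _)) // size_XsubC.
  move: Hy; case: k {Hx} => [|k] /=; lia.
rewrite (leq_trans (size_scale_leq _ _)) // (leq_trans Hx) // geq_max leq_maxl (leq_trans _ (leq_maxr _ _)) // leqW. all: by rewrite ?leqnSn.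
Qed.

Definition Dpoly q := (psol 0 1 q.+1).1 + (psol 1 0 q).1.

Lemma Dpoly_eval q lam : (Dpoly q).[lam] = discr q a b lam.
Proof.
by rewrite /Dpoly /discr /phi_ /theta_ hornerD !psol_eval.
Qed.

Lemma Dpoly_size q : (1 <= q)%N -> size (Dpoly q) = q.+1.
Proof.
move=> q1; rewrite /Dpoly size_addl; first by case: (psol_phi q.+1) => [[->]].
case: (psol_phi q.+1) => [[-> _] _].
case: (psol_theta q) => H _; apply: (leq_ltn_trans H); lia.
Qed.

End A.

End PartA.
Import PartA.

Module PartB.
Local Open Scope ring_scope.
Local Open Scope classical_set_scope.

Section B.
Variable R : realType.

Lemma poly_sq_big (p : {poly R}) : (1 < size p)%N ->
  exists n, forall x, n <= x -> 5 <= p.[x] ^+ 2.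
Proof.
move=> sp; have p0 : p != 0 by rewrite -size_poly_eq0; case: (size p) sp.
have [||n Hn] := @poly_lim_infty R (p * p) 5.
- by rewrite lead_coefM -expr2 lt_def sqr_ge0 andbT expf_neq0 // lead_coef_eq0.
- by rewrite size_mul //; case: (size p) sp => // k; rewrite addSn /=; lia.
by exists n => x /Hn; rewrite hornerM expr2.
Qed.

Lemma poly_abs_big (p : {poly R}) : (1 < size p)%N ->
  exists n, forall x, n <= `|x| -> 2 < `|p.[x]|.
Proof.
move=> sp.
have sp' : (1 < size (p \Po (- 'X)))%N.
  by rewrite size_comp_poly2 // size_polyN size_polyX.
have [n1 H1] := @poly_sq_big _ sp; have [n2 H2] := @poly_sq_big _ sp'.
exists (Num.max n1 n2) => x; rewrite ge_max => /andP[h1 h2].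
have key : 5 <= p.[x] ^+ 2.
  case: (lerP 0 x) => x0.
    by apply: H1; move: h1; rewrite ger0_norm.
  have := H2 (- x); rewrite horner_comp hornerN hornerX opprK; apply.
  by move: h2; rewrite ltr0_norm.
rewrite -(@ltr_pXn2r _ 2) ?nnegrE //= real_normK ?num_real //.
by apply: lt_le_trans key; rewrite (_ : 2 ^+ 2 = 4) //; lra.
Qed.

Lemma near_zero (p : {poly R}) (mu : R) : p.[mu] = 0 ->
  exists2 d, 0 < d & (`|p.[mu + d]| <= 2 /\ `|p.[mu - d]| <= 2).
Proof.
move=> pmu.
have H : \forall t \near mu, `|p.[mu] - p.[t]| < 1.
  exact: (cvgr_dist_lt _ _ (@continuous_horner _ p mu) _ ltr01).
have [d d0 Hd] := (nbhs_ballP mu _).1 H.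
have hb : forall e, `|e| < d -> `|p.[mu + e]| <= 2.
  move=> e he; have := Hd (mu + e); rewrite /= pmu sub0r normrN => h.
  apply/ltW/(lt_trans (h _)); last lra.
  by rewrite -ball_normE /= opprD addrA subrr sub0r normrN.
have d0' : 0 < d by [].
have d2 : 0 < d / 2 by rewrite divr_gt0.
exists (d / 2) => //.
split; first by apply: hb; rewrite gtr0_norm //; lra.
rewrite -[mu - _]/(mu + - (d / 2)); apply: hb.
by rewrite normrN gtr0_norm //; lra.
Qed.

End B.

End PartB.
Import PartB.

Module PartC.
Local Open Scope ring_scope.
Local Open Scope classical_set_scope.

Section C.
Variables (R : realType) (q : nat) (a b : int -> R).
Hypothesis apos : forall n : int, 0 < a n.
Hypothesis q1 : (1 <= q)%N.

Lemma spec_bounded : exists n, forall x, spectrum q a b x -> `|x| < n.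
Proof.
have sp : (1 < size (Dpoly a b q))%N by rewrite (Dpoly_size b apos q1).
have [n Hn] := poly_abs_big sp.
exists n => x; rewrite /spectrum /= -Dpoly_eval => hx.
by rewrite ltNge; apply/negP => /Hn; rewrite ltNge hx.
Qed.

Lemma mu_in (mu : R) : discr q a b mu = 0 -> lam0p q a b < mu < lamqm q a b.
Proof.
move=> Dmu; rewrite -Dpoly_eval in Dmu.
have [d d0 [h1 h2]] := near_zero Dmu.
have [n Hn] := spec_bounded.
have hub : has_ubound (spectrum q a b).
  by exists n => x /Hn /(le_lt_trans (ler_norm x)) /ltW.
have hlb : has_lbound (spectrum q a b).
  exists (- n) => x /Hn; rewrite ltr_norml => /andP[+ _]; exact: ltW.
apply/andP; split.
  have := ge_inf hlb (_ : spectrum q a b (mu - d)).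
  by move=> /(_ _) H; apply: (le_lt_trans (H _)); [rewrite /spectrum /= -Dpoly_eval|lra].
have := ub_le_sup hub (_ : spectrum q a b (mu + d)).
by move=> /(_ _) H; apply: (lt_le_trans _ (H _)); [lra|rewrite /spectrum /= -Dpoly_eval].
Qed.

End C.

End PartC.
Import PartC.

Module PartD.
Local Open Scope ring_scope.
Local Open Scope complex_scope.

Ltac bsimp := repeat match goal with
 | |- context [nat_of_bool ?c] =>
   match c with true => fail 1 | false => fail 1 | _ => idtac end;
   let E := fresh in
   first [ have E : c = true by lia | have E : c = false by lia ]; rewrite E; clear E
 | |- context [if ?c then _ else _] =>
   match c with true => fail 1 | false => fail 1 | _ => idtac end;
   let E := fresh in
   first [ have E : c = true by lia | have E : c = false by lia ]; rewrite E; clear E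
 end.

Ltac fin := rewrite /= ?mulr1n ?mulr0n ?mul0r ?mul1r ?add0r ?addr0.

Section D.
Variables (R : realType) (q : nat) (a b : int -> R).
Hypothesis q2 : (2 <= q)%N.

Definition Lform (i j : nat) : R[i] :=
  (i == j)%:R * (b j.+1)%:C
  + ((0 < j)%N && (i == j.-1))%:R * (a j)%:C
  + (i == j.+1)%:R * (a j.+1)%:C
  + ((j == q.-1) && (i == 0%N))%:R * ('i * (a q)%:C)
  + ((j == 0%N) && (i == q.-1))%:R * (- ('i * (a q)%:C)).


Lemma Lmat_entry (i j : 'I_q) : Lmat q a b i j = Lform i j.
Proof.
rewrite mxE /Lform; case: i j => [i Hi] [j Hj] /=.
have -> : (Ordinal Hi == Ordinal Hj) = (i == j) by [].
have [<-|nij] := eqVneq i j; first by bsimp; fin.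
have [qe|qn] := eqVneq q 2%N.
  have [[-> ->]|[-> ->]] : (i = 0 /\ j = 1 \/ i = 1 /\ j = 0)%N by lia.
  - by bsimp; fin; rewrite qe.
  - by bsimp; fin; rewrite qe.
have [->|h1] := eqVneq j i.+1; first by bsimp; fin.
have [->|h2] := eqVneq i j.+1; first by bsimp; fin.
have [/andP[/eqP ei /eqP ej]|h3] := boolP ((i == 0%N) && (j == q.-1)).
  by subst i j; bsimp; fin.
have [/andP[/eqP ei /eqP ej]|h4] := boolP ((i == q.-1) && (j == 0%N)).
  by subst i j; bsimp; fin.
by bsimp; fin.
Qed.
End D.

Section E.
Variables (R : realType) (n : nat) (a b : int -> R).
Local Notation q := n.+2.
Variable (v : 'rV[R[i]]_q).

Definition vv (k : nat) : R[i] := v 0 (inord k).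

Definition psi (k : nat) : R[i] :=
  if k == 0%N then - ('i * vv q.-1) else if (k <= q)%N then vv k.-1 else 'i * vv 0.

Lemma sum_ind (c : bool) (m : nat) (z : R[i]) :
  \sum_(i < q) v 0 i * ((c && (i == m :> nat))%:R * z) = (c && (m < q)%N)%:R * (vv m * z).
Proof.
case: c => /=; last by rewrite big1 ?mulr0n ?mul0r // => i _ /=; rewrite ?mulr0n ?mul0r mulr0.
have [hm|hm] := ltnP m q.
  rewrite (bigD1 (Ordinal hm)) //= eqxx big1 ?addr0 /=.
    by rewrite /vv !mul1r; congr (_ * _); congr (v 0 _); apply/val_inj; rewrite /= inordK.
  move=> i /negP hi /=; case: eqP => ei; last by rewrite ?mulr0n ?mul0r mulr0.
  by exfalso; apply: hi; apply/eqP/val_inj.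
rewrite big1 ?mulr0n ?mul0r // => i _ /=; case: eqP => ei; last by rewrite ?mulr0n ?mul0r mulr0.
by move: (ltn_ord i); rewrite ei ltnNge hm.
Qed.

Lemma sum_ind1 (m : nat) (z : R[i]) :
  \sum_(i < q) v 0 i * ((i == m :> nat)%:R * z) = (m < q)%N%:R * (vv m * z).
Proof. exact: (sum_ind true). Qed.

Lemma col_eq (j : nat) : (j < q)%N -> (v *m Lmat q a b) 0 (inord j) =
  vv j * (b j.+1)%:C
  + (0 < j)%N%:R * (vv j.-1 * (a j)%:C)
  + (j.+1 < q)%N%:R * (vv j.+1 * (a j.+1)%:C)
  + (j == q.-1)%:R * (vv 0 * ('i * (a q)%:C))
  + (j == 0%N)%:R * (vv q.-1 * (- ('i * (a q)%:C))).
Proof.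
move=> hj; rewrite mxE.
under eq_bigr => i _ do rewrite Lmat_entry // inordK // /Lform !mulrDr.
rewrite !big_split /= !sum_ind1 !sum_ind.
have h1 : (j.-1 < q)%N by lia.
by rewrite hj h1 ltnSn /= !andbT mul1r.
Qed.

Lemma psi_rec (mu : R[i]) : a 0%N = a q -> v *m Lmat q a b = mu *: v ->
  forall j, (j < q)%N ->
  (a j)%:C * psi j + (b j.+1)%:C * psi j.+1 + (a j.+1)%:C * psi j.+2 = mu * psi j.+1.
Proof.
move=> a0 Hv j hj.
have := congr1 (fun M : 'M[R[i]]_(1, q) => M 0 (inord j)) Hv.
rewrite col_eq // mxE /psi => H.
have [j0|jn0] := eqVneq j 0%N.
  subst j; move: H; bsimp; fin => <-; rewrite a0; ring.
have [jq|jnq] := eqVneq j n.+1.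
  subst j; move: H; bsimp; fin => <-; ring.
move: H; bsimp; fin => <-; ring.
Qed.
End E.

Section F.
Variables (R : realType) (n : nat) (a b : int -> R).
Hypothesis apos : forall k : int, 0 < a k.
Local Notation q := n.+2.
Variable (v : 'rV[R[i]]_q).
Variable (mu : R).
Hypothesis a0 : a 0%N = a q.
Hypothesis vn0 : v != 0.
Hypothesis Hv : v *m Lmat q a b = mu%:C *: v.

Let th k := sol a b mu 1 0 k.
Let ph k := sol a b mu 0 1 k.
Let chi k := psi v 0 * (th k)%:C + psi v 1 * (ph k)%:C.

Lemma chi_rec (k : nat) : (a k)%:C * chi k + (b k.+1)%:C * chi k.+1 + (a k.+1)%:C * chi k.+2
   = mu%:C * chi k.+1.
Proof.
have e1 := solR b apos mu 1 0 k; have e2 := solR b apos mu 0 1 k.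
rewrite /chi /th /ph.
transitivity (psi v 0 * (a k * sol a b mu 1 0 k + b k.+1 * sol a b mu 1 0 k.+1 +
   a k.+1 * sol a b mu 1 0 k.+2)%:C + psi v 1 * (a k * sol a b mu 0 1 k + b k.+1 * sol a b mu 0 1 k.+1 +
   a k.+1 * sol a b mu 0 1 k.+2)%:C).
  rewrite !rmorphD !rmorphM /=; ring.
rewrite e1 e2 !rmorphM /=; ring.
Qed.

Lemma aC_neq0 (k : int) : (a k)%:C != 0 :> R[i].
Proof.
apply/eqP => /(congr1 (@complex.Re R)) /= h.
by move: (apos k); rewrite h ltxx.
Qed.

Lemma psi_chi k : (k <= q)%N -> psi v k = chi k /\ psi v k.+1 = chi k.+1.
Proof.
elim: k => [_|k IH hk].
  by rewrite /chi /th /ph /sol /=; split; ring.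
have [IH1 IH2] := IH (ltnW hk); split=> //.
have r1 := psi_rec a0 Hv hk; have r2 := chi_rec k.
apply: (mulfI (aC_neq0 k.+1)).
have e : forall x y z w : R[i], x + y + z = w -> z = w - x - y by move=> x y z w <-; ring.
by rewrite (e _ _ _ _ r1) (e _ _ _ _ r2) IH1 IH2.
Qed.

Lemma floquet : discr q a b mu = 0.
Proof.
have [e0 _] := psi_chi (leqnn q).
have [_ e1] := psi_chi (leqnn q).
have W := wronsk b apos mu q.
rewrite -a0 in W.
have W' : th q * ph q.+1 - ph q * th q.+1 = 1.
  apply: (mulfI (aneq0 apos (Posz 0))); rewrite mulr1; exact: W.
set x := psi v 0; set y := psi v 1.
set A := (th q)%:C; set B := (ph q)%:C; set C := (th q.+1)%:C; set D := (ph q.+1)%:C.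
have ii : 'i * 'i = -1 :> R[i] by rewrite -expr2 sqr_i.
have eqA : x * A + y * B = 'i * x.
  rewrite -[LHS]/(chi q) -e0 /x /psi; bsimp; fin.
  by rewrite mulrN mulrA ii mulN1r opprK.
have eqB : x * C + y * D = 'i * y.
  rewrite -[LHS]/(chi q.+1) -e1 /y /psi; bsimp; by fin.
have eA : (A - 'i) * x + B * y = 0.
  transitivity ((x * A + y * B) - 'i * x); first ring.
  by rewrite eqA subrr.
have eB : C * x + (D - 'i) * y = 0.
  transitivity ((x * C + y * D) - 'i * y); first ring.
  by rewrite eqB subrr.
set det := (A - 'i) * (D - 'i) - B * C.
have hx : x * det = 0.
  transitivity ((D - 'i) * ((A - 'i) * x + B * y) - B * (C * x + (D - 'i) * y)).
    by rewrite /det; ring.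
  by rewrite eA eB !mulr0 subrr.
have hy : y * det = 0.
  transitivity ((A - 'i) * (C * x + (D - 'i) * y) - C * ((A - 'i) * x + B * y)).
    by rewrite /det; ring.
  by rewrite eA eB !mulr0 subrr.
have hdet : det = - 'i * (th q + ph q.+1)%:C.
  transitivity ((A * D - B * C) - 'i * (A + D) + 'i * 'i); first by rewrite /det; ring.
  have -> : A * D - B * C = 1.
    by rewrite /A /B /C /D -!rmorphM -rmorphB W' rmorph1.
  rewrite ii rmorphD; ring.
have [d0|dn0] := eqVneq det 0.
  have i0 : 'i != 0 :> R[i].
    by apply/eqP => /(congr1 (@complex.Im R)) /= /eqP; rewrite oner_eq0.
  move/eqP: d0; rewrite hdet mulf_eq0 oppr_eq0 (negbTE i0) /= => /eqP h.
  have /= h' := congr1 (@complex.Re R) h.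
  by rewrite /discr /phi_ /theta_ addrC; exact: h'.
exfalso; move/negP: vn0; apply.
have x0 : x = 0 by move/eqP: hx; rewrite mulf_eq0 (negbTE dn0) orbF => /eqP.
have y0 : y = 0 by move/eqP: hy; rewrite mulf_eq0 (negbTE dn0) orbF => /eqP.
apply/eqP/rowP => j; rewrite mxE.
have hj : (j.+1 <= q)%N by [].
have [_ e2] := psi_chi (ltnW hj).
have : psi v j.+1 = 0 by rewrite e2 /chi -/x -/y x0 y0 !mul0r addr0.
rewrite /psi; bsimp; fin.
by rewrite /vv inord_val.
Qed.
End F.

End PartD.
Import PartD.

Module PartE.
Local Open Scope ring_scope.
Local Open Scope complex_scope.

Section G.
Variables (R : realType) (n : nat) (a b : int -> R).
Local Notation q := n.+2.

Lemma conj_i : (('i : R[i])^* )%R = - 'i.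
Proof. by apply/eqP; rewrite eq_complex /= oppr0 !eqxx. Qed.

Lemma conj_r (x : R) : (((x%:C) : R[i])^* )%R = x%:C.
Proof. exact: conjc_real. Qed.

Ltac cfin := bsimp; fin; apply/eqP; rewrite eq_complex /=; apply/andP; split; apply/eqP; ring.

Lemma Lherm : Lmat q a b \is hermsymmx.
Proof.
apply/is_hermitianmxP; rewrite expr0 scale1r; apply/matrixP => i j.
rewrite Lmat_entry // 2!mxE Lmat_entry // /Lform.
case: i j => [i Hi] [j Hj] /=.
have [<-|nij] := eqVneq i j; first by cfin.
have [qe|qn] := eqVneq n 0%N.
  have [[-> ->]|[-> ->]] : (i = 0 /\ j = 1 \/ i = 1 /\ j = 0)%N by lia.
  - by cfin.
  - by cfin.
have [->|h1] := eqVneq j i.+1; first by cfin.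
have [->|h2] := eqVneq i j.+1; first by cfin.
have [/andP[/eqP ei /eqP ej]|h3] := boolP ((i == 0%N) && (j == q.-1)).
  by subst i j; cfin.
have [/andP[/eqP ei /eqP ej]|h4] := boolP ((i == q.-1) && (j == 0%N)).
  by subst i j; cfin.
by cfin.
Qed.

Lemma trace_bound (c : R) (j : nat) :
  (forall mu : R, (exists v : 'rV[R[i]]_q, v != 0 /\ v *m Lmat q a b = mu%:C *: v) -> `|mu| < c) ->
  (0 < j)%N -> (q%:R)^-1 * \tr (mxpow (Lmat q a b) (2 * j)) < (c ^+ (2 * j))%:C.
Proof.
move=> Heig j0.
set L := Lmat q a b.
have hL : L \is normalmx by apply: hermitian_normalmx; exact: Lherm.
set P := spectralmx L; set d := spectral_diag L.
have /orthomx_spectralP EL := hL.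
have Pu : P \in unitmx := spectral_unit L.
have dreal : d \is a realmx by apply: hermitian_spectral_diag_real; exact: Lherm.
have Epow : forall m, mxpow L m = invmx P *m diag_mx (\row_k (d 0 k ^+ m)) *m P.
  elim => [|m IH].
    rewrite /mxpow /= (_ : \row_k (d 0 k ^+ 0) = const_mx 1); last first.
      by apply/rowP => k; rewrite !mxE expr0.
    by rewrite diag_const_mx mulmx1 (mulVmx Pu).
  rewrite [mxpow L m.+1]/mxpow /= -/(mxpow L m) IH {1}EL.
  rewrite !mulmxA (mulmxK Pu) -[invmx _ *m _ *m diag_mx _]mulmxA mulmx_diag.
  by congr (_ *m diag_mx _ *m _); apply/matrixP => i0 k; rewrite !mxE exprS.
have PL : forall k l, (P *m L) k l = d 0 k * P k l.
  move=> k l; rewrite {1}EL !mulmxA (mulmxV Pu) mul1mx mul_diag_mx mxE.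
  by [].
have dr : forall k, (complex.Re (d 0 k))%:C = d 0 k.
  by move=> k; apply: RRe_real; exact: (mxOverP dreal 0 k).
have eig : forall k : 'I_q, `|complex.Re (d 0 k)| < c.
  move=> k; apply: Heig; exists (row k P); split.
    apply/negP => /eqP r0.
    have h := row_mul k P (invmx P).
    rewrite (mulmxV Pu) r0 mul0mx in h.
    have := congr1 (fun M : 'rV[R[i]]_q => M 0 k) h.
    by rewrite !mxE eqxx /= => /eqP; rewrite oner_eq0.
  apply/rowP => l; rewrite -row_mul [LHS]mxE PL [RHS]mxE [in RHS]mxE dr.
  by [].
rewrite Epow mxtrace_mulC mulmxA (mulmxV Pu) mul1mx mxtrace_diag.
under eq_bigr => k _ do rewrite mxE -dr -rmorphXn.
rewrite -rmorph_sum.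
have -> : (q%:R : R[i])^-1 = ((q%:R : R)^-1)%:C by rewrite fmorphV rmorph_nat.
rewrite -rmorphM ltcR ltr_pdivrMl ?ltr0n //.
have c0 : 0 < c by apply: le_lt_trans (eig ord0).
apply: (@lt_le_trans _ _ (\sum_(k < q) c ^+ (2 * j))).
  apply: ltr_sum.
    by apply/hasP; exists ord0 => //; rewrite mem_index_enum.
  move=> k _; have hr := eig k.
  rewrite exprM -real_normK ?num_real // -exprM ltrXn2r //.
  by rewrite muln_eq0 negb_or /= -lt0n j0.
by rewrite sumr_const card_ord mulr_natl.
Qed.
End G.

End PartE.
Import PartE.

Local Open Scope ring_scope.

Theorem mainTheorem11 (R : realType) (q : nat) (a b : int -> R) :
  (2 <= q)%N ->
  (forall n : int, 0 < a n) ->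
  (forall n : int, a (n + (Posz q)) = a n) ->
  (forall n : int, b (n + (Posz q)) = b n) ->
  normalised q a b ->
  forall j : nat, (1 <= j)%N ->
    (q%:R)^-1 * \tr (mxpow (Lmat q a b) (2 * j)) < ((halfwidth q a b) ^+ (2 * j))%:C%C.
Proof.
move=> hq apos aper bper hnorm j hj.
destruct q as [|[|n]]; try by [].
have a0 : a 0%N = a n.+2 by rewrite -(aper 0) add0r.
apply: trace_bound => // mu [v [vn0 Hv]].
have Dmu := floquet apos a0 vn0 Hv.
have /andP[h1 h2] := mu_in apos (isT : (1 <= n.+2)%N) Dmu.
have hw : halfwidth n.+2 a b = lamqm n.+2 a b.
  by rewrite /halfwidth hnorm; field.
rewrite hw ltr_norml h2 andbT.
by rewrite -hnorm.
Qed.
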